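(* Let $\rho_0,\rho_1$ be two density matrices of the same dimension with $\|\rho_0-\rho_1\|_t=t$. Consider the following protocol: Alice tosses a uniformly random bit $b$, chooses a pure state from (a realization of) the mixture $\rho_b$, and sends it to Bob; then Bob returns a state to Alice, and Alice projects it onto the original pure state she sent to test whether Bob has manipulated it (she detects cheating if this projection fails). Then for any $0\le p\le 1$ there is a strategy for Bob such that he learns $b$ with advantage $t\sqrt{p}$, and his probability of detection is at most $\frac12\left(1-\sqrt{1-p}\right)$.
   Context: For an operator $A$, the trace norm is $\|A\|_t=\mathrm{Trace}(\sqrt{A^\dagger A})$. Bob's strategy may use ancilla systems and arbitrary unitaries; he returns a system of the original dimension to Alice and keeps the rest. Bob's advantage in learning $b$ is measured by the trace-norm distance $\|\sigma_0-\sigma_1\|_t$, where $\sigma_b$ is the density matrix of the system Bob retains conditioned on Alice's bit being $b$. *)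

(* Defs.v *)
From HB Require Import structures.
From mathcomp Require Import all_boot all_order all_algebra.
From mathcomp Require Import sesquilinear spectral.
From Stdlib Require Import ClassicalEpsilon.
Set Implicit Arguments. Unset Strict Implicit. Unset Printing Implicit Defensive.
Import Order.TTheory GRing.Theory Num.Theory.
Local Open Scope ring_scope.
Local Open Scope sesquilinear_scope.

Section QDefs.
Variable C : numClosedFieldType.

(* positive semidefinite: <v, A v> >= 0 for all v (over C this forces A Hermitian) *)
Definition psdmx n (A : 'M[C]_n) : Prop :=
  forall v : 'cV[C]_n, 0 <= (v ^t* *m A *m v) 0 0.

Definition density n (A : 'M[C]_n) : Prop := psdmx A /\ \tr A = 1.

Definition msqrt n (A : 'M[C]_n) : 'M[C]_n :=
  epsilon (inhabits 0) (fun S => psdmx S /\ S *m S = A).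

Definition tnorm n (A : 'M[C]_n) : C := \tr (msqrt (A ^t* *m A)).

(* bipartite system: index k : 'I_(n*m) corresponds to the pair (i,j),
   k = mxvec_index i j (first factor dimension n, second m) *)
Definition tpair n m (k : 'I_(n * m)) : 'I_n * 'I_m :=
  enum_val (cast_ord (esym (mxvec_cast n m)) k).

Definition tensmx n m (A : 'M[C]_n) (B : 'M[C]_m) : 'M[C]_(n * m) :=
  \matrix_(k, l) (A (tpair k).1 (tpair l).1 * B (tpair k).2 (tpair l).2).

Definition ptrace2 n m (M : 'M[C]_(n * m)) : 'M[C]_n :=
  \matrix_(i, i') \sum_(j < m) M (mxvec_index i j) (mxvec_index i' j).

Definition ptrace1 n m (M : 'M[C]_(n * m)) : 'M[C]_m :=
  \matrix_(j, j') \sum_(i < n) M (mxvec_index i j) (mxvec_index i j').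

Definition realization n (rho : 'M[C]_n) k (q : 'I_k -> C) (psi : 'I_k -> 'cV[C]_n)
  : Prop :=
  [/\ forall i, 0 <= q i,
      \sum_(i < k) q i = 1,
      forall i, (psi i ^t* *m psi i) 0 0 = 1 &
      \sum_(i < k) q i *: (psi i *m psi i ^t*) = rho].

(* Bob's strategy: ancilla (dim m) in state tau, unitary U on system (x) ancilla.
   Joint state after Bob's action when Alice sent psi: *)
Definition bob_out n m (U : 'M[C]_(n * m)) (tau : 'M[C]_m) (psi : 'cV[C]_n)
  : 'M[C]_(n * m) :=
  U *m tensmx (psi *m psi ^t*) tau *m U ^t*.

(* state Bob retains (the ancilla), conditioned on Alice's bit, whose
   ensemble is (q, psi) *)
Definition bob_kept n m (U : 'M[C]_(n * m)) (tau : 'M[C]_m) k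
  (q : 'I_k -> C) (psi : 'I_k -> 'cV[C]_n) : 'M[C]_m :=
  \sum_(i < k) q i *: ptrace1 (bob_out U tau (psi i)).

(* probability that Alice's projection onto the sent state fails,
   conditioned on her bit, whose ensemble is (q, psi) *)
Definition detect_cond n m (U : 'M[C]_(n * m)) (tau : 'M[C]_m) k
  (q : 'I_k -> C) (psi : 'I_k -> 'cV[C]_n) : C :=
  \sum_(i < k) q i *
    (1 - (psi i ^t* *m ptrace2 (bob_out U tau (psi i)) *m psi i) 0 0).

End QDefs.

(* Main.v *)
Require Import Defs.
From HB Require Import structures.
From mathcomp Require Import all_boot all_order all_algebra.
From mathcomp Require Import sesquilinear spectral.
From mathcomp Require Import ring.
From Stdlib Require Import ClassicalEpsilon.
Set Implicit Arguments. Unset Strict Implicit. Unset Printing Implicit Defensive.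
Import Order.TTheory GRing.Theory Num.Theory.
Local Open Scope ring_scope.
Local Open Scope sesquilinear_scope.

Section Tens.
Variable C : numClosedFieldType.
Variables n m : nat.

Lemma tpairK (i : 'I_n) (j : 'I_m) : tpair (mxvec_index i j) = (i, j).
Proof. by rewrite /tpair /mxvec_index cast_ordK enum_rankK. Qed.

Lemma sum_pair (F : 'I_(n * m) -> C) :
  \sum_(k < n * m) F k = \sum_(i < n) \sum_(j < m) F (mxvec_index i j).
Proof.
rewrite (reindex (uncurry (@mxvec_index n m))); last first.
  by apply: onW_bij; have [g h1 h2] := @curry_mxvec_bij n m; exists g => x; [apply: h1|apply: h2].
by rewrite pair_big /=; apply: eq_bigr => -[i j].
Qed.

Lemma tensmxE (A : 'M[C]_n) (B : 'M[C]_m) i j i' j' :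
  tensmx A B (mxvec_index i j) (mxvec_index i' j') = A i i' * B j j'.
Proof. by rewrite /tensmx mxE !tpairK. Qed.

Lemma mxvec_index_inj (i i' : 'I_n) (j j' : 'I_m) :
  (mxvec_index i j == mxvec_index i' j') = (i == i') && (j == j').
Proof.
apply/eqP/andP => [E|[/eqP-> /eqP->]] //.
by have := congr1 (@tpair n m) E; rewrite !tpairK => -[-> ->].
Qed.

Lemma tensmx_mul (A A' : 'M[C]_n) (B B' : 'M[C]_m) :
  tensmx A B *m tensmx A' B' = tensmx (A *m A') (B *m B').
Proof.
apply/matrixP => k l; case/mxvec_indexP: k => i j; case/mxvec_indexP: l => i' j'.
rewrite tensmxE !mxE sum_pair big_distrl /=; apply: eq_bigr => a _.
rewrite big_distrr /=; apply: eq_bigr => b _.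
by rewrite !tensmxE mulrACA.
Qed.

Lemma tensmx_adj (A : 'M[C]_n) (B : 'M[C]_m) :
  (tensmx A B) ^t* = tensmx (A ^t*) (B ^t*).
Proof.
apply/matrixP => k l; case/mxvec_indexP: k => i j; case/mxvec_indexP: l => i' j'.
by rewrite !mxE rmorphM.
Qed.

Lemma tensmxDl (A A' : 'M[C]_n) (B : 'M[C]_m) :
  tensmx (A + A') B = tensmx A B + tensmx A' B.
Proof.
apply/matrixP => k l; case/mxvec_indexP: k => i j; case/mxvec_indexP: l => i' j'.
by rewrite !mxE mulrDl.
Qed.

Lemma tensmxDr (A : 'M[C]_n) (B B' : 'M[C]_m) :
  tensmx A (B + B') = tensmx A B + tensmx A B'.
Proof.
apply/matrixP => k l; case/mxvec_indexP: k => i j; case/mxvec_indexP: l => i' j'.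
by rewrite !mxE mulrDr.
Qed.

Lemma tensmx1 : tensmx (1%:M : 'M[C]_n) (1%:M : 'M[C]_m) = 1%:M.
Proof.
apply/matrixP => k l; case/mxvec_indexP: k => i j; case/mxvec_indexP: l => i' j'.
by rewrite tensmxE !mxE mxvec_index_inj; case: (i == i'); case: (j == j'); rewrite /= ?mulr0 ?mul0r ?mulr1.
Qed.

Lemma ptrace1_tens (A : 'M[C]_n) (B : 'M[C]_m) : ptrace1 (tensmx A B) = \tr A *: B.
Proof.
apply/matrixP => j j'; rewrite !mxE big_distrl /=; apply: eq_bigr => i _.
by rewrite ?mxE ?tpairK.
Qed.

Lemma ptrace2_tens (A : 'M[C]_n) (B : 'M[C]_m) : ptrace2 (tensmx A B) = \tr B *: A.
Proof.
apply/matrixP => i i'; rewrite !mxE /mxtrace big_distrl /=; apply: eq_bigr => j _.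
by rewrite ?mxE ?tpairK mulrC.
Qed.

Lemma ptrace1D (M N : 'M[C]_(n * m)) : ptrace1 (M + N) = ptrace1 M + ptrace1 N.
Proof. by apply/matrixP => j j'; rewrite !mxE -big_split; apply: eq_bigr => i _; rewrite mxE. Qed.

Lemma ptrace2D (M N : 'M[C]_(n * m)) : ptrace2 (M + N) = ptrace2 M + ptrace2 N.
Proof. by apply/matrixP => j j'; rewrite !mxE -big_split; apply: eq_bigr => i _; rewrite mxE. Qed.

End Tens.

Section Herm.
Variable C : numClosedFieldType.

Definition bf n (u : 'cV[C]_n) (B : 'M[C]_n) (w : 'cV[C]_n) : C := (u ^t* *m B *m w) 0 0.

Lemma bfE n (u : 'cV[C]_n) B w :
  bf u B w = \sum_k \sum_l (u k 0)^* * B k l * w l 0.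
Proof.
rewrite /bf mxE exchange_big /=; apply: eq_bigr => l _; rewrite mxE big_distrl /=.
by apply: eq_bigr => k _; rewrite !mxE.
Qed.

Lemma bf_conj n (u : 'cV[C]_n) B w : (bf u B w)^* = bf w (B ^t*) u.
Proof.
rewrite !bfE rmorph_sum exchange_big /=; apply: eq_bigr => l _.
rewrite rmorph_sum; apply: eq_bigr => k _.
rewrite !mxE !rmorphM /= conjCK; ring.
Qed.

Lemma bfDl n (u u' : 'cV[C]_n) B w : bf (u + u') B w = bf u B w + bf u' B w.
Proof. by rewrite /bf linearD /= map_mxD !mulmxDl mxE. Qed.

Lemma bfDr n (u : 'cV[C]_n) B w w' : bf u B (w + w') = bf u B w + bf u B w'.
Proof. by rewrite /bf mulmxDr mxE. Qed.

Lemma bfZl n (u : 'cV[C]_n) B w z : bf (z *: u) B w = z^* * bf u B w.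
Proof. by rewrite /bf linearZ /= map_mxZ -!scalemxAl mxE. Qed.

Lemma bfZr n (u : 'cV[C]_n) B w z : bf u B (z *: w) = z * bf u B w.
Proof. by rewrite /bf -scalemxAr mxE. Qed.

Lemma bf_delta n (B : 'M[C]_n) i j : bf (delta_mx i 0) B (delta_mx j 0) = B i j.
Proof.
rewrite bfE (bigD1 i) //= [X in _ + X]big1 => [|k /negPf ki]; last first.
  by apply: big1 => l _; rewrite !mxE ki rmorph0 !mul0r.
rewrite addr0 (bigD1 j) //= [X in _ + X]big1 => [|l /negPf lj]; last by rewrite !mxE lj mulr0.
by rewrite !mxE !eqxx rmorph1 mul1r mulr1 addr0.
Qed.

Lemma qform0 n (B : 'M[C]_n) : (forall v, bf v B v = 0) -> B = 0.
Proof.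
move=> H; apply/matrixP => i j; rewrite mxE.
have Hii := H (delta_mx i 0); rewrite bf_delta in Hii.
have Hjj := H (delta_mx j 0); rewrite bf_delta in Hjj.
have E z : bf (delta_mx i 0 + z *: delta_mx j 0) B (delta_mx i 0 + z *: delta_mx j 0)
   = z * B i j + z^* * B j i + z^* * z * B j j + B i i.
  rewrite !bfDl !bfDr !bfZl !bfZr !bf_delta; ring.
have E1 := E 1; rewrite H rmorph1 Hii Hjj in E1.
have E2 := E 'i; rewrite H conjCi Hii Hjj in E2.
have : 2 * 'i * B i j = 0.
  have -> : 2 * 'i * B i j = 'i * (1 * B i j + 1 * B j i + 1 * 1 * 0 + 0)
     + ('i * B i j + - 'i * B j i + - 'i * 'i * 0 + 0) by ring.
  by rewrite -E1 -E2 mulr0 addr0.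
move/eqP; rewrite !mulf_eq0 pnatr_eq0 /=.
have iN0 : 'i != 0 :> C.
  apply/eqP => ei; have := @sqrCi C; rewrite ei expr0n /= => /eqP.
  by rewrite eq_sym oppr_eq0 oner_eq0.
by rewrite (negPf iN0) /= => /eqP.
Qed.

Lemma bfBm n (u : 'cV[C]_n) B B' w : bf u (B - B') w = bf u B w - bf u B' w.
Proof. by rewrite /bf mulmxBr mulmxBl !mxE. Qed.

Lemma bfDm n (u : 'cV[C]_n) B B' w : bf u (B + B') w = bf u B w + bf u B' w.
Proof. by rewrite /bf mulmxDr mulmxDl mxE. Qed.

Lemma bf_mulr n (u : 'cV[C]_n) X Y w : bf u (X *m Y) w = bf u X (Y *m w).
Proof. by rewrite /bf !mulmxA. Qed.

Lemma bf_mull n (u : 'cV[C]_n) X Y w : bf u (X *m Y) w = bf (X ^t* *m u) Y w.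
Proof. by rewrite /bf trmx_mul map_mxM trmxCK !mulmxA. Qed.

Lemma psd_herm n (A : 'M[C]_n) : psdmx A -> A ^t* = A.
Proof.
move=> H; apply/eqP; rewrite -subr_eq0; apply/eqP; apply: qform0 => v.
have h : bf v (A ^t*) v = bf v A v.
  by rewrite -bf_conj geC0_conj //; exact: H.
by rewrite bfBm h subrr.
Qed.

Lemma diag_qform n (w : 'cV[C]_n) (a : 'rV[C]_n) :
  bf w (diag_mx a) w = \sum_i a 0 i * (w i 0 * (w i 0)^*).
Proof.
rewrite bfE; apply: eq_bigr => i _.
rewrite (bigD1 i) //= big1 => [|l /negPf li]; last by rewrite !mxE eq_sym li mulr0n mulr0 mul0r.
by rewrite !mxE eqxx mulr1n addr0; ring.
Qed.

Lemma unitary_l n (P : 'M[C]_n) : P \is unitarymx -> P ^t* *m P = 1%:M.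
Proof. by move=> U; have := mulmxKtV (1%:M : 'M[C]_n) U (erefl n); rewrite !mul1mx. Qed.

Lemma unitary_r n (P : 'M[C]_n) : P \is unitarymx -> P *m P ^t* = 1%:M.
Proof. by move/unitarymxP. Qed.

Lemma herm_spectral n (A : 'M[C]_n) : A ^t* = A ->
  exists P (d : 'rV[C]_n), [/\ P \is unitarymx, (forall i, d 0 i \is Num.real) &
     A = P ^t* *m diag_mx d *m P].
Proof.
move=> H.
have Ah : A \is hermsymmx by apply/is_hermitianmxP; rewrite expr0 scale1r H.
have /orthomx_spectralP E := hermitian_normalmx Ah.
have R := hermitian_spectral_diag_real Ah.
exists (spectralmx A), (spectral_diag A); split.
- exact: spectral_unitarymx.
- by move=> i; have /mxOverP := R; apply.
- by rewrite {1}E invmx_unitary // spectral_unitarymx.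
Qed.

Lemma bf_conjP n (P D : 'M[C]_n) v w :
  bf v (P ^t* *m D *m P) w = bf (P *m v) D (P *m w).
Proof. by rewrite /bf trmx_mul map_mxM !mulmxA. Qed.

Lemma psd_null n (S : 'M[C]_n) v : psdmx S -> bf v S v = 0 -> S *m v = 0.
Proof.
move=> Sp Z; have [P [d [Pu dR SE]]] := herm_spectral (psd_herm Sp).
have dge0 i : 0 <= d 0 i.
  have := Sp (P ^t* *m delta_mx i 0); rewrite -/(bf _ _ _).
  by rewrite SE bf_conjP mulmxA unitary_r // mul1mx bf_delta mxE eqxx mulr1n.
move: Z; rewrite SE bf_conjP diag_qform => /eqP.
rewrite psumr_eq0 => [/allP Hall|i _]; last by rewrite mulr_ge0 // mul_conjC_ge0.
rewrite -mulmxA -mulmxA.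
suff -> : diag_mx d *m (P *m v) = 0 by rewrite mulmx0.
apply/matrixP => i j; rewrite ord1 mul_diag_mx mxE [RHS]mxE.
have := Hall i (mem_index_enum _); rewrite mulf_eq0 mul_conjC_eq0.
by case/orP => /eqP ->; rewrite ?mul0r ?mulr0.
Qed.

Lemma diag_delta n (w : 'rV[C]_n) (i : 'I_n) : diag_mx w *m (delta_mx i 0 : 'cV[C]_n) = w 0 i *: delta_mx i 0.
Proof.
apply/matrixP => k l; rewrite mul_diag_mx !mxE ord1 /=.
by case: (eqVneq k i) => [->|]; rewrite ?mulr1 ?mulr0.
Qed.

Lemma psd_sqrt_unique n (S T : 'M[C]_n) :
  psdmx S -> psdmx T -> S *m S = T *m T -> S = T.
Proof.
move=> Sp Tp SST; apply/eqP; rewrite -subr_eq0; apply/eqP.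
set W := S - T.
have Wh : W ^t* = W by rewrite /W linearB /= map_mxB (psd_herm Sp) (psd_herm Tp).
have [P [w [Pu wR WE]]] := herm_spectral Wh.
suff w0 : w = 0 by rewrite WE w0 raddf0 mulmx0 mul0mx.
apply/rowP => i; rewrite [RHS]mxE.
apply/eqP; apply: contraT => wN0.
pose v := P ^t* *m (delta_mx i 0 : 'cV[C]_n).
have Wv : W *m v = w 0 i *: v.
  by rewrite /v WE -!mulmxA (mulmxA P) unitary_r // mul1mx diag_delta scalemxAr.
have K : S *m W + W *m T = 0.
  by rewrite /W mulmxBr mulmxBl SST addrA subrK subrr.
have : bf v (S *m W + W *m T) v = 0 by rewrite K /bf mulmx0 mul0mx mxE.
rewrite bfDm bf_mulr bf_mull Wh Wv bfZr bfZl conj_Creal // -mulrDr.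
move/eqP; rewrite mulf_eq0 (negPf wN0) /= paddr_eq0; [|exact: Sp|exact: Tp].
case/andP => /eqP /(psd_null Sp) Sv /eqP /(psd_null Tp) Tv.
have : W *m v = 0 by rewrite /W mulmxBl Sv Tv subrr.
rewrite Wv => /eqP; rewrite scaler_eq0 (negPf wN0) /= => /eqP v0.
have : P *m v = delta_mx i 0 by rewrite /v mulmxA unitary_r // mul1mx.
rewrite v0 mulmx0 => /matrixP /(_ i 0); rewrite !mxE !eqxx /= => /eqP.
by rewrite eq_sym oner_eq0.
Qed.

End Herm.

Section Gen.
Variable C : numClosedFieldType.

Lemma psd_diag n (a : 'rV[C]_n) : (forall i, 0 <= a 0 i) -> psdmx (diag_mx a).
Proof.
move=> H v; rewrite -/(bf _ _ _) diag_qform; apply: sumr_ge0 => i _.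
by rewrite mulr_ge0 // mul_conjC_ge0.
Qed.

Lemma psd_conjdiag n (P : 'M[C]_n) (a : 'rV[C]_n) : (forall i, 0 <= a 0 i) ->
  psdmx (P ^t* *m diag_mx a *m P).
Proof. by move=> H v; rewrite -/(bf _ _ _) bf_conjP; apply: psd_diag. Qed.

Lemma bf1_ge0 n (v : 'cV[C]_n) : 0 <= bf v 1%:M v.
Proof. by rewrite -diag_const_mx; apply: psd_diag => i; rewrite mxE ler01. Qed.

Lemma tnorm_eq n (A S : 'M[C]_n) : psdmx S -> S *m S = A ^t* *m A -> tnorm A = \tr S.
Proof.
move=> Sp SS; rewrite /tnorm /msqrt.
have [H1 H2] := epsilon_spec (inhabits 0) (fun S => psdmx S /\ S *m S = A ^t* *m A)
   (ex_intro _ S (conj Sp SS)).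
by rewrite (psd_sqrt_unique H1 Sp) // H2 SS.
Qed.

Lemma trace_conj n (P X : 'M[C]_n) : P \is unitarymx -> \tr (P ^t* *m X *m P) = \tr X.
Proof. by move=> Pu; rewrite mxtrace_mulC mulmxA unitary_r // mul1mx. Qed.

Lemma mx11_mul (X Y : 'M[C]_1) : (X *m Y) 0 0 = X 0 0 * Y 0 0.
Proof. by rewrite mxE big_ord1. Qed.

Lemma bf_outer n (u v w : 'cV[C]_n) A B :
  bf u (A *m (v *m v ^t*) *m B) w = bf u A v * bf v B w.
Proof.
by rewrite /bf -mx11_mul !mulmxA.
Qed.

Lemma tr_outer n (v : 'cV[C]_n) A : \tr (A *m (v *m v ^t*)) = bf v A v.
Proof.
by rewrite mulmxA mxtrace_mulC /bf mulmxA /mxtrace big_ord1.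
Qed.

End Gen.

Section Delta.
Variable C : numClosedFieldType.
Variable n : nat.
Variables rho0 rho1 : 'M[C]_n.
Hypothesis D0 : density rho0.
Hypothesis D1 : density rho1.

Definition Dl := rho0 - rho1.

Lemma Dl_herm : Dl ^t* = Dl.
Proof.
by rewrite /Dl linearB /= map_mxB (psd_herm D0.1) (psd_herm D1.1).
Qed.

Definition Pm := spectralmx Dl.
Definition dv := spectral_diag Dl.

Lemma Pm_unitary : Pm \is unitarymx.
Proof. exact: spectral_unitarymx. Qed.

Lemma dv_real i : dv 0 i \is Num.real.
Proof.
have Ah : Dl \is hermsymmx by apply/is_hermitianmxP; rewrite expr0 scale1r Dl_herm.
by have /mxOverP := hermitian_spectral_diag_real Ah; apply.
Qed.

Lemma DlE : Dl = Pm ^t* *m diag_mx dv *m Pm.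
Proof.
have Ah : Dl \is hermsymmx by apply/is_hermitianmxP; rewrite expr0 scale1r Dl_herm.
have /orthomx_spectralP E := hermitian_normalmx Ah.
by rewrite {1}E invmx_unitary // spectral_unitarymx.
Qed.

Definition ev : 'rV[C]_n := \row_i (if 0 <= dv 0 i then 1 else 0).
Definition Pi := Pm ^t* *m diag_mx ev *m Pm.
Definition Pc := 1%:M - Pi.
Definition cc := \tr (Pi *m Dl).

Lemma conj_diag (a : 'rV[C]_n) : (forall i, (a 0 i)^* = a 0 i) -> (diag_mx a) ^t* = diag_mx a.
Proof.
move=> H; rewrite tr_diag_mx map_diag_mx; congr diag_mx.
by apply/rowP => i; rewrite mxE; apply: H.
Qed.

Lemma Pi_adj : Pi ^t* = Pi.
Proof.
rewrite /Pi !trmx_mul !map_mxM trmxCK conj_diag ?mulmxA // => i.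
by rewrite mxE; case: ifP; rewrite ?rmorph1 ?rmorph0.
Qed.

Lemma Pi2 : Pi *m Pi = Pi.
Proof.
rewrite /Pi -!mulmxA (mulmxA Pm) unitary_r ?Pm_unitary // mul1mx.
rewrite (mulmxA (diag_mx ev)) mulmx_diag mulmxA [RHS]mulmxA; congr (_ *m diag_mx _ *m _).
by apply/rowP => i; rewrite !mxE; case: ifP; rewrite ?mulr1 ?mulr0.
Qed.

Lemma Pc_adj : Pc ^t* = Pc.
Proof. by rewrite /Pc linearB /= map_mxB Pi_adj trmx1 map_mx1. Qed.

Lemma PiPc : Pi *m Pc = 0.
Proof. by rewrite /Pc mulmxBr mulmx1 Pi2 subrr. Qed.

Lemma PcPi : Pc *m Pi = 0.
Proof. by rewrite /Pc mulmxBl mul1mx Pi2 subrr. Qed.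

Lemma Pc2 : Pc *m Pc = Pc.
Proof. by rewrite {1}/Pc mulmxBl mul1mx PiPc subr0. Qed.

Lemma ccE : cc = \sum_i ev 0 i * dv 0 i.
Proof.
rewrite /cc /Pi DlE -!mulmxA (mulmxA Pm) unitary_r ?Pm_unitary // mul1mx.
rewrite (mulmxA (diag_mx ev)) mulmx_diag mulmxA trace_conj ?Pm_unitary // mxtrace_diag.
by apply: eq_bigr => i _; rewrite mxE.
Qed.

Lemma cc_ge0 : 0 <= cc.
Proof.
rewrite ccE; apply: sumr_ge0 => i _; rewrite mxE.
by case: ifP => h; rewrite ?mul1r ?mul0r.
Qed.

Lemma trDl0 : \sum_i dv 0 i = 0.
Proof.
have : \tr Dl = 0 by rewrite /Dl linearB /= D0.2 D1.2 subrr.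
by rewrite DlE trace_conj ?Pm_unitary // mxtrace_diag.
Qed.

Lemma tnormDl : tnorm Dl = cc *+ 2.
Proof.
pose ad : 'rV[C]_n := \row_i `|dv 0 i|.
rewrite (@tnorm_eq _ _ _ (Pm ^t* *m diag_mx ad *m Pm)).
- rewrite trace_conj ?Pm_unitary // mxtrace_diag ccE.
  transitivity ((\sum_i ev 0 i * dv 0 i) *+ 2 - \sum_i dv 0 i); last by rewrite trDl0 subr0.
  rewrite -sumrMnl -sumrB; apply: eq_bigr => i _; rewrite !mxE.
  have := dv_real i; rewrite realE; case: ifP => h _.
    by rewrite ger0_norm // mul1r mulr2n addrK.
  rewrite ler0_norm ?mul0r ?mul0rn ?sub0r //.
  by have := dv_real i; rewrite realE h /=.
- by apply: psd_conjdiag => i; rewrite mxE normr_ge0.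
- rewrite Dl_herm DlE -!mulmxA (mulmxA Pm) unitary_r ?Pm_unitary // mul1mx.
  rewrite (mulmxA Pm) unitary_r ?Pm_unitary // mul1mx (mulmxA (diag_mx ad)) (mulmxA (diag_mx dv)) !mulmx_diag !mulmxA.
  congr (_ *m diag_mx _ *m _); apply/rowP => i; rewrite !mxE.
  by rewrite -!expr2 real_normK ?dv_real.
Qed.

End Delta.

Section Anc.
Variable C : numClosedFieldType.
Variable p : C.
Hypothesis hp : 0 <= p <= 1.

Definition gg := sqrtC (1 - p).
Definition al := sqrtC ((1 + gg) / 2).
Definition be := sqrtC ((1 - gg) / 2).

Lemma gg_ge0 : 0 <= gg.
Proof. by rewrite sqrtC_ge0 subr_ge0; case/andP: hp. Qed.

Lemma gg_le1 : gg <= 1.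
Proof.
case/andP: hp => p0 p1.
rewrite /gg -[X in _ <= X]sqrtC1 ler_sqrtC ?nnegrE ?subr_ge0 ?ler01 //.
by rewrite lerBlDr lerDl.
Qed.

Lemma half_ge0 (x : C) : 0 <= x -> 0 <= x / 2.
Proof. by move=> h; rewrite mulr_ge0 // invr_ge0 ler0n. Qed.

Lemma al_ge0 : 0 <= al.
Proof. by rewrite sqrtC_ge0 half_ge0 // addr_ge0 // gg_ge0. Qed.

Lemma be_ge0 : 0 <= be.
Proof. by rewrite sqrtC_ge0 half_ge0 // subr_ge0 gg_le1. Qed.

Lemma al2 : al ^+ 2 = (1 + gg) / 2.
Proof. exact: sqrtCK. Qed.

Lemma be2 : be ^+ 2 = (1 - gg) / 2.
Proof. exact: sqrtCK. Qed.

Lemma gg2 : gg ^+ 2 = 1 - p.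
Proof. exact: sqrtCK. Qed.

Lemma alc : al^* = al. Proof. exact: geC0_conj al_ge0. Qed.
Lemma bec : be^* = be. Proof. exact: geC0_conj be_ge0. Qed.

Lemma albe : al * al + be * be = 1.
Proof. by rewrite -!expr2 al2 be2; field. Qed.

Lemma albe_g : al * al - be * be = gg.
Proof. by rewrite -!expr2 al2 be2; field. Qed.

Lemma albe_p : al * be *+ 2 = sqrtC p.
Proof.
have h : (al * be *+ 2) ^+ 2 = p.
  rewrite -mulr_natl !exprMn al2 be2.
  have -> : p = 1 - gg ^+ 2 by rewrite gg2; ring.
  by field.
by rewrite -h sqrCK // mulrn_wge0 // mulr_ge0 ?al_ge0 ?be_ge0.
Qed.

Definition xv (s : C) : 'cV[C]_2 := \col_i (if (i : nat) == 0%N then al else s * be).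
Definition Rm (s : C) : 'M[C]_2 :=
  \matrix_(i, j) (if (i : nat) == j then al else if (i : nat) == 0%N then - (s * be) else s * be).
Definition tau : 'M[C]_2 := diag_mx (\row_j (if (j : nat) == 0%N then 1 else 0)).

Lemma tau_density : density tau.
Proof.
split.
  by apply: psd_diag => i; rewrite mxE; case: ifP; rewrite ?ler01.
by rewrite mxtrace_diag !big_ord_recl big_ord0 !mxE /= addr0 addr0.
Qed.

Lemma Rm_unitary s : s^* = s -> s * s = 1 -> Rm s \is unitarymx.
Proof.
move=> sc ss; apply/unitarymxP; apply/matrixP => i j.
rewrite !mxE !big_ord_recl big_ord0 !mxE /=.
have E1 : al * al + (s * s) * (be * be) = 1 by rewrite ss mul1r albe.
case: i => [[|[|i]]] Hi //=; case: j => [[|[|j]]] Hj //=;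
  rewrite ?(rmorphN, rmorphM) /= ?sc ?alc ?bec.
- by rewrite -E1; ring.
- ring.
- ring.
- by rewrite -E1; ring.
Qed.

Lemma Kss s s' : s'^* = s' ->
  Rm s *m tau *m (Rm s') ^t* = xv s *m (xv s') ^t*.
Proof.
move=> sc; apply/matrixP => i j.
rewrite !mxE !big_ord_recl !big_ord0 !mxE /=.
case: i => [[|[|i]]] Hi //=; case: j => [[|[|j]]] Hj //=;
  rewrite ?big_ord_recl ?big_ord0 ?mxE /= ?(rmorphN, rmorphM) /= ?sc ?alc ?bec; ring.
Qed.

Lemma tr_xv s s' : s'^* = s' -> \tr (xv s *m (xv s') ^t*) = al * al + s * s' * (be * be).
Proof.
move=> sc; rewrite /mxtrace !big_ord_recl big_ord0 !mxE !big_ord1 !mxE /=.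
rewrite ?(rmorphN, rmorphM) /= ?sc ?alc ?bec; ring.
Qed.

Definition offd (k : C) : 'M[C]_2 := \matrix_(i, j) (if i == j then 0 else k).

Lemma diffK : xv 1 *m (xv 1) ^t* - xv (-1) *m (xv (-1)) ^t* = offd (sqrtC p).
Proof.
rewrite -albe_p; apply/matrixP => i j.
rewrite !mxE !big_ord1 !mxE /=.
case: i => [[|[|i]]] Hi //=; case: j => [[|[|j]]] Hj //=;
  rewrite ?(rmorphN, rmorphM, rmorph1) /= ?alc ?bec; ring.
Qed.

Lemma offdZ k a : k *: offd a = offd (k * a).
Proof.
apply/matrixP => i j; rewrite !mxE; case: (i == j); ring.
Qed.

Lemma tnorm_offd k : 0 <= k -> tnorm (offd k) = k *+ 2.
Proof.
move=> k0; rewrite (@tnorm_eq _ _ _ (k%:M)).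
- by rewrite mxtrace_scalar.
- by rewrite -diag_const_mx; apply: psd_diag => i; rewrite mxE.
- apply/matrixP => i j; rewrite !mxE !big_ord_recl !big_ord0 !mxE /=.
  case: i => [[|[|i]]] Hi //=; case: j => [[|[|j]]] Hj //=;
  rewrite ?geC0_conj //; ring.
Qed.

End Anc.

Section Main.
Variable C : numClosedFieldType.
Variable n : nat.
Variables rho0 rho1 : 'M[C]_n.
Hypothesis D0 : density rho0.
Hypothesis D1 : density rho1.
Variable p : C.
Hypothesis hp : 0 <= p <= 1.

Local Notation PI := (Pi rho0 rho1).
Local Notation PC := (Pc rho0 rho1).
Local Notation KK a b := (Rm p a *m tau C *m (Rm p b) ^t*).

Definition UU : 'M[C]_(n * 2) := tensmx PI (Rm p 1) + tensmx PC (Rm p (-1)).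

Lemma tensmx0l m (B : 'M[C]_m) : tensmx (0 : 'M[C]_n) B = 0.
Proof. by apply/matrixP => k l; rewrite !mxE mul0r. Qed.

Lemma adjD k (A B : 'M[C]_k) : (A + B) ^t* = A ^t* + B ^t*.
Proof. by rewrite linearD /= map_mxD. Qed.

Lemma PiPc1 : PI + PC = 1%:M.
Proof. by rewrite /Pc addrC subrK. Qed.

Lemma UU_unitary : UU \is unitarymx.
Proof.
have c1 : (1 : C)^* = 1 by rewrite rmorph1.
have cm1 : (-1 : C)^* = -1 by rewrite rmorphN rmorph1.
have h1 := unitarymxP (Rm_unitary hp c1 (mulr1 1)).
have h2 := unitarymxP (Rm_unitary hp cm1 (etrans (mulrNN 1 1) (mulr1 1))).
apply/unitarymxP; rewrite /UU adjD !tensmx_adj Pi_adj Pc_adj !mulmxDl !mulmxDr !tensmx_mul.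
rewrite Pi2 Pc2 PiPc PcPi !tensmx0l addr0 add0r h1.
rewrite h2.
by rewrite -tensmxDl PiPc1 tensmx1.
Qed.

Lemma bob_outE (psi : 'cV[C]_n) :
  bob_out UU (tau C) psi =
    tensmx (PI *m (psi *m psi ^t*) *m PI) (KK 1 1)
  + tensmx (PI *m (psi *m psi ^t*) *m PC) (KK 1 (-1))
  + tensmx (PC *m (psi *m psi ^t*) *m PI) (KK (-1) 1)
  + tensmx (PC *m (psi *m psi ^t*) *m PC) (KK (-1) (-1)).
Proof.
rewrite /bob_out /UU adjD !tensmx_adj Pi_adj Pc_adj.
move: (Pc rho0 rho1) (Pi rho0 rho1) => Q Q'.
by rewrite !mulmxDl !mulmxDr !tensmx_mul !addrA.
Qed.

Lemma trABA k (A X B : 'M[C]_k) : \tr (A *m X *m B) = \tr (B *m A *m X).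
Proof. by rewrite mxtrace_mulC mulmxA. Qed.

Lemma c1 : (1 : C)^* = 1. Proof. by rewrite rmorph1. Qed.
Lemma cm1 : (-1 : C)^* = -1. Proof. by rewrite rmorphN rmorph1. Qed.

Lemma kept_psi (psi : 'cV[C]_n) :
  ptrace1 (bob_out UU (tau C) psi) =
    bf psi PI psi *: (xv p 1 *m (xv p 1) ^t*)
  + bf psi PC psi *: (xv p (-1) *m (xv p (-1)) ^t*).
Proof.
rewrite bob_outE !ptrace1D !ptrace1_tens (trABA PI _ PI) (trABA PI _ PC) (trABA PC _ PI) (trABA PC _ PC).
rewrite Pi2 Pc2 PiPc PcPi !mul0mx linear0.
by rewrite !scale0r !addr0 !tr_outer !(Kss hp _ c1) !(Kss hp _ cm1).
Qed.

Lemma bfZm k (u : 'cV[C]_k) a B w : bf u (a *: B) w = a * bf u B w.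
Proof. by rewrite /bf -scalemxAr -scalemxAl mxE. Qed.

Lemma fid_psi (psi : 'cV[C]_n) :
  bf psi (ptrace2 (bob_out UU (tau C) psi)) psi =
    bf psi PI psi * bf psi PI psi + gg p * (bf psi PI psi * bf psi PC psi)
  + gg p * (bf psi PC psi * bf psi PI psi) + bf psi PC psi * bf psi PC psi.
Proof.
rewrite bob_outE !ptrace2D !ptrace2_tens !(Kss hp _ c1) !(Kss hp _ cm1).
rewrite !(tr_xv hp _ c1) !(tr_xv hp _ cm1).
have e1 : al p * al p + 1 * 1 * (be p * be p) = 1 by rewrite mulr1 mul1r albe.
have e2 : al p * al p + 1 * -1 * (be p * be p) = gg p by rewrite mul1r mulN1r (albe_g p).
have e3 : al p * al p + -1 * 1 * (be p * be p) = gg p by rewrite mulr1 mulN1r (albe_g p).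
have e4 : al p * al p + -1 * -1 * (be p * be p) = 1 by rewrite mulrNN mulr1 mul1r albe.
rewrite e1 e2 e3 e4 !scale1r.
move: (Pc rho0 rho1) (Pi rho0 rho1) => Q Q'.
by rewrite !bfDm !bfZm !bf_outer.
Qed.

End Main.

Section Fin.
Variable C : numClosedFieldType.

Lemma ineq_fid (x y g : C) : 0 <= x -> 0 <= y -> x + y = 1 -> g <= 1 ->
  1 - (x * x + g * (x * y) + g * (y * x) + y * y) <= (1 - g) / 2.
Proof.
move=> x0 y0 xy g1; rewrite -subr_ge0.
have -> : y = 1 - x by rewrite -xy addrC addKr.
have -> : (1 - g) / 2 - (1 - (x * x + g * (x * (1 - x)) + g * ((1 - x) * x) + (1 - x) * (1 - x)))
   = (1 - g) * (x - (1 - x)) ^+ 2 / 2 by field.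
rewrite mulr_ge0 ?invr_ge0 ?ler0n // mulr_ge0 ?subr_ge0 // real_exprn_even_ge0 //.
by rewrite rpredB // ger0_real // -xy addrC addKr.
Qed.

Lemma sum_tr n (rho : 'M[C]_n) k (q : 'I_k -> C) psi A :
  realization rho q psi -> \sum_i q i * bf (psi i) A (psi i) = \tr (A *m rho).
Proof.
case=> _ _ _ <-; rewrite mulmx_sumr linear_sum /=; apply: eq_bigr => i _.
by rewrite -scalemxAr linearZ /= tr_outer.
Qed.

End Fin.

Theorem theorem15 (C : numClosedFieldType) (n : nat) (rho0 rho1 : 'M[C]_n)
  (t p : C) :
  density rho0 -> density rho1 -> tnorm (rho0 - rho1) = t ->
  0 <= p <= 1 ->
  exists (m : nat) (tau : 'M[C]_m) (U : 'M[C]_(n * m)),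
    density tau /\ U \is unitarymx /\
    forall (k0 : nat) (q0 : 'I_k0 -> C) (psi0 : 'I_k0 -> 'cV[C]_n)
           (k1 : nat) (q1 : 'I_k1 -> C) (psi1 : 'I_k1 -> 'cV[C]_n),
      realization rho0 q0 psi0 -> realization rho1 q1 psi1 ->
      tnorm (bob_kept U tau q0 psi0 - bob_kept U tau q1 psi1) = t * sqrtC p
      /\ (detect_cond U tau q0 psi0 + detect_cond U tau q1 psi1) / 2
           <= (1 - sqrtC (1 - p)) / 2.
Proof.
move=> D0 D1 Ht hp.
exists 2%N, (tau C), (UU rho0 rho1 p); split; first exact: tau_density.
split; first exact: UU_unitary.
move=> k0 q0 psi0 k1 q1 psi1 R0 R1.
set A := xv p 1 *m (xv p 1) ^t*.
set B := xv p (-1) *m (xv p (-1)) ^t*.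
have KE : forall (rho : 'M[C]_n) k (q : 'I_k -> C) psi, density rho ->
    realization rho q psi ->
    bob_kept (UU rho0 rho1 p) (tau C) q psi
      = \tr (Pi rho0 rho1 *m rho) *: A + (1 - \tr (Pi rho0 rho1 *m rho)) *: B.
  move=> rho k q psi Dr R; rewrite /bob_kept.
  transitivity (\sum_i (q i * bf (psi i) (Pi rho0 rho1) (psi i)) *: A
              + \sum_i (q i * bf (psi i) (Pc rho0 rho1) (psi i)) *: B).
    by rewrite -big_split; apply: eq_bigr => i _; rewrite kept_psi // scalerDr !scalerA.
  rewrite -!scaler_suml (sum_tr _ R) (sum_tr _ R); congr (_ + _ *: _).
  by rewrite /Pc mulmxBl mul1mx linearB /= Dr.2.
have DB : forall (rho : 'M[C]_n) k (q : 'I_k -> C) psi,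
    realization rho q psi ->
    detect_cond (UU rho0 rho1 p) (tau C) q psi <= (1 - gg p) / 2.
  move=> rho k q psi R; have [Rq Rs Rn _] := R; rewrite /detect_cond.
  apply: (@le_trans _ _ (\sum_i q i * ((1 - gg p) / 2))); last first.
    by rewrite -big_distrl /= Rs mul1r.
  apply: ler_sum => i _; apply: ler_wpM2l => //.
  rewrite -/(bf _ _ _) fid_psi //.
  apply: ineq_fid; last exact: (gg_le1 hp).
  - by have := bf1_ge0 (Pi rho0 rho1 *m psi i); rewrite -bf_conjP mulmx1 Pi_adj Pi2.
  - by have := bf1_ge0 (Pc rho0 rho1 *m psi i); rewrite -bf_conjP mulmx1 Pc_adj Pc2.
  - by rewrite -bfDm PiPc1 /bf mulmx1 Rn.
split.
  rewrite (KE _ _ _ _ D0 R0) (KE _ _ _ _ D1 R1).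
  have -> : forall c0 c1 : C, c0 *: A + (1 - c0) *: B - (c1 *: A + (1 - c1) *: B)
      = (c0 - c1) *: (A - B).
    by move=> c0 c1; apply/matrixP => i j; rewrite !mxE; ring.
  have -> : \tr (Pi rho0 rho1 *m rho0) - \tr (Pi rho0 rho1 *m rho1) = cc rho0 rho1.
    by rewrite /cc /Dl mulmxBr linearB.
  rewrite /A /B (diffK hp) offdZ tnorm_offd; last first.
    by rewrite mulr_ge0 ?(cc_ge0 D0 D1) // sqrtC_ge0; case/andP: hp.
  by rewrite -Ht -/(Dl rho0 rho1) (tnormDl D0 D1) mulrnAl.
have E : (1 - sqrtC (1 - p)) / 2 = ((1 - gg p) / 2 + (1 - gg p) / 2) / 2 by rewrite /gg; field.
by rewrite E ler_wpM2r ?invr_ge0 ?ler0n // lerD // (DB _ _ _ _ R0, DB _ _ _ _ R1).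
Qed.
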